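(* Let $M=(E,\mathcal{I})$ be a matroid, $\Delta$ a nonnegative integer, $w:E\to\{-\Delta,\dots,\Delta\}$ integer weights and $\mu\ge 0$. Let $A,B\in\mathcal{I}$ be disjoint with $|A|=|B|=k$ and $|w(A)-w(B)|\le\mu$. Then there are unicolor subsets $A'\subseteq A$ and $B'\subseteq B$ of equal cardinality such that (i) $(A\setminus A')\cup B'\in\mathcal{I}$, (ii) $|A'|=|B'|\ge (k-\mu)/(2\Delta+1)^4$, and (iii) $w(a)\ge w(b)$ for each $a\in A'$ and $b\in B'$.
   Context: $w(S)=\sum_{e\in S}w(e)$. A set $S\subseteq E$ is unicolor if $w(x)=w(y)$ for all $x,y\in S$. *)

(* Defs.v *)
From HB Require Import structures.
From mathcomp Require Import all_boot all_order all_algebra.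
Set Implicit Arguments. Unset Strict Implicit. Unset Printing Implicit Defensive.
Import Order.TTheory GRing.Theory Num.Theory.

Definition is_matroid (T : finType) (indep : {set T} -> bool) : Prop :=
  [/\ indep set0,
      (forall X Y : {set T}, Y \subset X -> indep X -> indep Y)
    & (forall X Y : {set T}, indep X -> indep Y -> #|X| < #|Y| ->
         exists2 y, y \in Y :\: X & indep (y |: X))].

Definition wset (T : finType) (w : T -> int) (S : {set T}) : int :=
  (\sum_(e in S) w e)%R.

Definition unicolor (T : finType) (w : T -> int) (S : {set T}) : Prop :=
  forall x y, x \in S -> y \in S -> w x = w y.

(* Main.v *)
Require Import Defs.
From HB Require Import structures.
From mathcomp Require Import all_boot all_order all_algebra zify lra.
Import Order.TTheory GRing.Theory Num.Theory.

Lemma cnt_eq (m N : nat) : \sum_(i < N) (m == i : nat) = (m < N).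
Proof.
elim: N => [|N IH]; first by rewrite big_ord0.
rewrite big_ord_recr /= IH ltnS leq_eqVlt.
case: (ltngtP m N) => /= h; lia.
Qed.

Lemma cnt_le (m N : nat) : \sum_(i < N) (m <= i : nat) = N - m.
Proof.
elim: N => [|N IH]; first by rewrite big_ord0.
rewrite big_ord_recr /= IH.
case: leqP => h; lia.
Qed.

Lemma cnt_ge (m N : nat) : \sum_(i < N) (i <= m : nat) = minn N m.+1.
Proof.
elim: N => [|N IH]; first by rewrite big_ord0.
rewrite big_ord_recr /= IH.
case: leqP => h; lia.
Qed.

Lemma card_filt (T : finType) (S : {set T}) (P : pred T) :
  #|[set e in S | P e]| = \sum_(e in S) (P e : nat).
Proof.
rewrite -sum1_card (eq_bigl (fun e => (e \in S) && P e)); last by move=> e; rewrite inE.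
by rewrite big_mkcondr /=; apply: eq_bigr => e _; case: (P e).
Qed.

Lemma pigeon (T : finType) (S : {set T}) (c : T -> nat) (N : nat) :
  (forall e, e \in S -> c e < N) ->
  exists z, #|S| <= N * #|[set e in S | c e == z]|.
Proof.
move=> hc.
have eq: #|S| = \sum_(z < N) #|[set e in S | c e == z]|.
  under eq_bigr => z _ do rewrite card_filt.
  rewrite exchange_big /= -sum1_card; apply: eq_bigr => e he.
  by rewrite cnt_eq hc.
case: N hc eq => [|N] hc eq.
  by exists 0; rewrite eq big_ord0.
pose F := fun z : 'I_N.+1 => #|[set e in S | c e == z]|.
have hpos : 0 < #|'I_N.+1| by rewrite card_ord.
have [z hz] := bigop.eq_bigmax F hpos.
exists (nat_of_ord z); rewrite [X in _ * X](_ : _ = F z) // -hz eq.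
apply: (@leq_trans (\sum_(i < N.+1) \max_j F j)).
  by apply: leq_sum => i _; apply: (bigop.leq_bigmax (F:=F) i).
by rewrite sum_nat_const card_ord.
Qed.

Lemma augment (T : finType) (indep : {set T} -> bool) : is_matroid indep ->
  forall n X Y, indep X -> indep Y -> #|X| + n = #|Y| ->
  exists Z : {set T}, [/\ X \subset Z, Z \subset X :|: Y, indep Z & #|Z| = #|Y|].
Proof.
move=> [_ _ aug]; elim=> [|n IH] X Y iX iY hs.
  by exists X; rewrite subxx subsetUl -hs addn0.
have lt : #|X| < #|Y| by lia.
have [y yin iyX] := aug X Y iX iY lt.
move: yin; rewrite inE => /andP [ynX yY].
have [|Z [h1 h2 h3 h4]] := IH (y |: X) Y iyX iY.
  by rewrite cardsU1 ynX; lia.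
exists Z; split => //.
  by apply: subset_trans h1; apply: subsetUr.
apply: subset_trans h2 _; apply/subsetP => e; rewrite !inE.
by case/orP => [/orP [/eqP -> |] | ->]; rewrite ?yY ?orbT // => ->.
Qed.

Local Open Scope ring_scope.
Lemma final (R : realFieldType) (N k p cA cB : nat) (mu : R) (d : int) :
  d = cA%:Z - cB%:Z -> `|d|%:~R <= mu -> (cA + k <= N ^ 3 * p + cB)%N -> (0 < N)%N ->
  (k%:R - mu) / (N ^ 4)%N%:R <= p%:R.
Proof.
move=> hd hmu hn hN.
have hi : (k%:Z - `|d| <= (N ^ 3 * p)%N%:Z).
  rewrite hd; lia.
have hr : k%:R - `|d|%:~R <= (N ^ 3 * p)%N%:R :> R.
  by move: hi; rewrite -(ler_int R) rmorphB /=.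
have h1 : ((N ^ 3 * p)%N%:R : R) <= ((N ^ 4 * p)%N%:R : R).
  rewrite ler_nat; apply: leq_mul => //; rewrite [X in (_ <= X)%N]expnS leq_pmull //.
rewrite ler_pdivrMr ?ltr0n ?expn_gt0 ?hN // -natrM mulnC.
lra.
Qed.

Lemma maxsum (N : nat) (F : 'I_N -> nat) : (0 < N)%N ->
  exists i : 'I_N, (\sum_(j < N) F j <= N * F i)%N.
Proof.
move=> hN.
have hpos : (0 < #|'I_N|)%N by rewrite card_ord.
have [z hz] := bigop.eq_bigmax F hpos.
exists z; rewrite -hz.
apply: (@leq_trans (\sum_(i < N) \max_j F j)).
  by apply: leq_sum => i _; apply: (bigop.leq_bigmax (F:=F) i).
by rewrite sum_nat_const card_ord.
Qed.

Lemma wset_c (T : finType) (w : T -> int) (c : T -> nat) (D : nat) (S : {set T}) :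
  (forall e, (c e)%:Z = w e + D%:Z) ->
  wset w S = (\sum_(e in S) c e)%N%:Z - (#|S| * D)%N%:Z.
Proof.
move=> hc; rewrite /wset.
have -> : \sum_(e in S) w e = \sum_(e in S) ((c e)%:Z - D%:Z).
  by apply: eq_bigr => e _; rewrite hc addrK.
rewrite sumrB (big_morph Posz PoszD (erefl _)) sumr_const.
by rewrite -mulr_natr natz -PoszM mulnC.
Qed.

Lemma arith (N k G S cA cB B1 B2 A2 : nat) : (S + cB = k * N + cA + k ->
  S <= N * G -> N * G <= N * k + N * B1 -> N * B1 <= N * (N * B2) ->
  N * (N * B2) <= N * (N * (N * A2)) -> cA + k <= N * (N * (N * A2)) + cB)%N.
Proof. move=> h1 h2 h3 h4 h5; rewrite [(k * N)%N]mulnC in h1; lia. Qed.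

Theorem corollary9 (R : realFieldType) (T : finType) (indep : {set T} -> bool)
  (Delta : nat) (w : T -> int) (mu : R) (A B : {set T}) (k : nat) :
  is_matroid indep ->
  (forall e, `|w e| <= Delta%:Z) ->
  0 <= mu ->
  indep A -> indep B -> [disjoint A & B] ->
  #|A| = k -> #|B| = k ->
  (`|wset w A - wset w B|%:~R <= mu) ->
  exists A' B' : {set T},
    [/\ A' \subset A, B' \subset B, unicolor w A', unicolor w B'
      & #|A'| = #|B'|] /\
    [/\ indep ((A :\: A') :|: B'),
        (k%:R - mu) / ((2 * Delta + 1) ^ 4)%N%:R <= #|A'|%:R
      & forall a b, a \in A' -> b \in B' -> w b <= w a].
Proof.
move=> hM hw hmu iA iB dAB cardA cardB hAB.
have hM' := hM; case: hM' => _ hdown _.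
set N := (2 * Delta + 1)%N.
have hN : (0 < N)%N by rewrite /N addn1.
pose c e := absz (w e + Delta%:Z).
have hc e : (c e)%:Z = w e + Delta%:Z.
  have := hw e; rewrite /c; lia.
have hcN e : (c e < N)%N.
  have := hw e; have := hc e; rewrite /N; lia.
have hwle a b : (c b <= c a)%N -> w b <= w a.
  by move=> h; have := hc a; have := hc b; lia.
have hd : wset w A - wset w B = (\sum_(a in A) c a)%N%:Z - (\sum_(b in B) c b)%N%:Z.
  rewrite (@wset_c _ _ _ _ A hc) (@wset_c _ _ _ _ B hc) cardA cardB; lia.
pose g (y : nat) := (#|[set b in B | c b <= y]| + #|[set a in A | y <= c a]|)%N.
have sumg : (\sum_(y < N) g y + \sum_(b in B) c b = k * N + \sum_(a in A) c a + k)%N.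
  have e1 : (\sum_(j < N) #|[set b in B | c b <= j]| = \sum_(b in B) (N - c b))%N.
    rewrite (eq_bigr (fun j : 'I_N => \sum_(b in B) (c b <= j : nat))%N); last by move=> j _; rewrite card_filt.
    by rewrite exchange_big /=; apply: eq_bigr => b _; rewrite cnt_le.
  have e2 : (\sum_(j < N) #|[set a in A | j <= c a]| = \sum_(a in A) (c a + 1))%N.
    rewrite (eq_bigr (fun j : 'I_N => \sum_(a in A) (j <= c a : nat))%N); last by move=> j _; rewrite card_filt.
    rewrite exchange_big /=; apply: eq_bigr => a _; rewrite cnt_ge.
    by have := hcN a; lia.
  have e3 : (\sum_(b in B) (N - c b) + \sum_(b in B) c b = k * N)%N.
    rewrite -big_split /= (eq_bigr (fun _ => N)); last by move=> b _; have := hcN b; lia.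
    by rewrite sum_nat_const cardB.
  have e4 : (\sum_(a in A) (c a + 1) = \sum_(a in A) c a + k)%N.
    by rewrite big_split /= sum1_card cardA.
  rewrite /g big_split /= e1 e2 e4; lia.
have [y hy] := maxsum N (fun j : 'I_N => g j) hN.
set cA := (\sum_(a in A) c a)%N in hd sumg.
set cB := (\sum_(b in B) c b)%N in hd sumg.
suff [A' [B' [[h1 h2 h3 h4 h5] [h6 h7 h8]]]] : exists A' B' : {set T},
    [/\ A' \subset A, B' \subset B, unicolor w A', unicolor w B'
      & #|A'| = #|B'|] /\
    [/\ indep ((A :\: A') :|: B'), (cA + k <= N ^ 3 * #|A'| + cB)%N
      & forall a b, a \in A' -> b \in B' -> w b <= w a].
  exists A', B'; split => //; split => //.
  exact: (@final R N k _ cA cB mu _ hd hAB h7 hN).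
have hkN : (\sum_(j < N) g j <= N * g y)%N := hy.
case: (leqP (g y) k) => hgk.
  exists set0, set0; split; split.
  - exact: sub0set.
  - exact: sub0set.
  - by move=> x z; rewrite inE.
  - by move=> x z; rewrite inE.
  - by [].
  - by rewrite setD0 setU0.
  - rewrite cards0 muln0 add0n.
    have : (N * g y <= N * k)%N by rewrite leq_mul2l hgk orbT.
    lia.
  - by move=> a b; rewrite inE.
pose C := [set a in A | (c a < y)%N].
pose Y := [set b in B | (c b <= y)%N].
have hCA : C \subset A by apply/subsetP => a; rewrite /C inE => /andP[].
have hYB : Y \subset B by apply/subsetP => b; rewrite /Y inE => /andP[].
have cardC : (#|C| + #|[set a in A | y <= c a]| = k)%N.
  rewrite /C !card_filt -big_split /= -cardA -sum1_card; apply: eq_bigr => a _.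
  by case: ltnP.
have hgy : g y = (#|Y| + #|[set a in A | y <= c a]|)%N by [].
have hCY : (#|C| + (#|Y| - #|C|) = #|Y|)%N.
  move: hgk cardC; rewrite hgy; clear; lia.
have [Z1 [z1a z1b z1c z1d]] := @augment _ _ hM (#|Y| - #|C|)%N C Y
  (hdown _ _ hCA iA) (hdown _ _ hYB iB) hCY.
pose B1 := Z1 :\: C.
have cB1 : #|B1| = (#|Z1| - #|C|)%N by rewrite /B1 cardsD (setIidPr z1a).
have hB1Y : B1 \subset Y.
  apply/subsetP => e; rewrite /B1 in_setD => /andP[eC eZ].
  by move/subsetP: z1b => /(_ e eZ); rewrite in_setU (negbTE eC).
have [z hz] := pigeon _ B1 c N (fun e _ => hcN e).
pose B2 := [set e in B1 | c e == z].
have hB2B1 : B2 \subset B1 by apply/subsetP => e; rewrite /B2 inE => /andP[].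
have hB1Z1 : B1 \subset Z1 by apply: subsetDl.
pose X2 := C :|: B2.
have hX2Z1 : X2 \subset Z1.
  by rewrite /X2 subUset z1a (subset_trans hB2B1 hB1Z1).
have iX2 := hdown _ _ hX2Z1 z1c.
have cX2 : (#|X2| <= k)%N.
  rewrite -cardB; apply: leq_trans (subset_leq_card hX2Z1) _.
  by rewrite z1d subset_leq_card.
have [Z2 [z2a z2b z2c z2d]] := @augment _ _ hM (k - #|X2|)%N X2 A iX2 iA
  (ltac:(rewrite cardA; move: cX2; clear; lia)).
pose A1 := A :\: Z2.
have hB2B : B2 \subset B.
  exact: subset_trans hB2B1 (subset_trans hB1Y hYB).
have hZ2A : Z2 :\: A = B2.
  apply/setP => e; rewrite in_setD; apply/andP/idP.
    case=> eA eZ; move/subsetP: z2b => /(_ e eZ); rewrite in_setU (negbTE eA) orbF.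
    rewrite /X2 in_setU => /orP[eC|//].
    by rewrite (subsetP hCA e eC) in eA.
  move=> eB2; split.
    by rewrite (disjointFl dAB (subsetP hB2B e eB2)).
  by apply: (subsetP z2a); rewrite /X2 in_setU eB2 orbT.
have cA1 : #|A1| = #|B2|.
  have := cardsID A Z2; rewrite hZ2A z2d cardA => h1.
  by rewrite /A1 cardsD setIC cardA; move: h1; clear; lia.
have [x hx] := pigeon _ A1 c N (fun e _ => hcN e).
pose A2 := [set e in A1 | c e == x].
have hA2A1 : A2 \subset A1 by apply/subsetP => e; rewrite /A2 inE => /andP[].
have hA1A : A1 \subset A by apply: subsetDl.
have hA2A := subset_trans hA2A1 hA1A.
pose X3 := A :\: A2.
have iX3 : indep X3 := hdown _ _ (subsetDl _ _) iA.
have cX3 : (#|X3| + #|A2| = k)%N.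
  rewrite /X3 cardsD (setIidPr hA2A); move: (subset_leq_card hA2A); rewrite cardA; clear; lia.
have cX3' : (#|X3| + #|A2| = #|Z2|)%N.
  by rewrite z2d cardA.
have [Z3 [z3a z3b z3c z3d]] := @augment _ _ hM #|A2| X3 Z2 iX3 z2c cX3'.
pose B3 := Z3 :\: X3.
have eZ3 : X3 :|: B3 = Z3.
  apply/setP => e; rewrite /B3 in_setU in_setD.
  by case: (boolP (e \in X3)) => h //=; rewrite (subsetP z3a e h).
have cB3 : #|B3| = #|A2|.
  rewrite /B3 cardsD (setIidPr z3a) z3d z2d cardA; move: cX3; clear; lia.
have hB3B2 : B3 \subset B2.
  apply/subsetP => e; rewrite /B3 in_setD => /andP[eX eZ].
  have eZ2 : e \in Z2.
    by move/subsetP: z3b => /(_ e eZ); rewrite in_setU (negbTE eX).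
  rewrite -hZ2A in_setD eZ2 andbT; apply/negP => eA.
  have eA2 : e \in A2 by move: eX; rewrite /X3 in_setD eA andbT negbK.
  by move: (subsetP hA2A1 e eA2); rewrite /A1 in_setD eZ2.
exists A2, B3; split; split.
- exact: hA2A.
- exact: subset_trans hB3B2 hB2B.
- move=> a b; rewrite /A2 !inE => /andP[_ /eqP ha] /andP[_ /eqP hb].
  by apply: (addIr Delta%:Z); rewrite -!hc ha hb.
- move=> a b /(subsetP hB3B2) + /(subsetP hB3B2).
  rewrite /B2 !inE => /andP[_ /eqP ha] /andP[_ /eqP hb].
  by apply: (addIr Delta%:Z); rewrite -!hc ha hb.
- by rewrite cB3.
- by rewrite -/X3 eZ3.
- have t0 : (N * g y <= N * k + N * #|B1|)%N.
    rewrite -mulnDr leq_mul2l; apply/orP; right; rewrite cB1 z1d; move: cardC hgk; rewrite hgy; clear; lia.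
  have t1 : (N * #|B1| <= N * (N * #|B2|))%N by rewrite leq_mul2l hz orbT.
  have t2 : (N * (N * #|A1|) <= N * (N * (N * #|A2|)))%N.
    by rewrite !leq_mul2l hx !orbT.
  rewrite cA1 in t2.
  have -> : (N ^ 3 * #|A2| = N * (N * (N * #|A2|)))%N.
    by rewrite !expnS expn0 muln1 !mulnA.
  exact: (arith N k (g y) _ cA cB _ _ _ sumg hkN t0 t1 t2).
- move=> a b aA2 bB3.
  apply: hwle.
  have hb : (c b <= y)%N.
    have := subsetP hB1Y b (subsetP hB2B1 b (subsetP hB3B2 b bB3)).
    by rewrite /Y inE => /andP[].
  have ha : (y <= c a)%N.
    have aA1 := subsetP hA2A1 a aA2.
    have aA := subsetP hA1A a aA1.
    move: aA1; rewrite /A1 in_setD => /andP[aZ2 _].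
    rewrite leqNgt; apply/negP => lt.
    have aC : a \in C by rewrite /C inE aA lt.
    by move: aZ2; rewrite (subsetP z2a a); rewrite // /X2 in_setU aC.
  exact: leq_trans hb ha.
Qed.
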